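(* Let $R$ be a $*$-ring with unity and $a,b\in R$. The following are equivalent: (i) $a$ and $b$ are generalized comparable; (ii) there exist decompositions $a=x+y$ and $b=z+w$ with $x\perp y$, $z\perp w$, $x\sim z$, and $y,w$ very orthogonal.
   Context: Natural partial order: $a\leq b$ iff there is $x\in R$ with $a=xa=xb=ax^*=bx^*$. Orthogonality: $a\perp b$ iff there is $x\in R$ with $xa=a=ax^*$, $xb=0=bx^*$. Equivalence: $a\sim b$ iff there exist $x,y\in R$ with $aa^*=xx^*$, $bb^*=yy^*$, $a^*a=y^*y$, $b^*b=x^*x$, $x=ax=xb$, $y=by=ya$. Dominance: $a\lesssim b$ iff $a\sim c\leq b$ for some $c$. $a,b$ are generalized comparable if there is a central projection $h$ ($h=h^2=h^*$ central) with $ha\lesssim hb$ and $(1-h)b\lesssim(1-h)a$. $y,w$ are very orthogonal if there is a central projection $h$ with $hy=y$ and $hw=0$ (or with the roles interchanged as needed; the paper's definition: $ha=a$, $hb=0$ for the pair $(a,b)$, and in (ii) $y,w$ very orthogonal is used with $hw=w$, $hy=0$). *)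

(* Defs.v *)
From mathcomp Require Import all_boot all_algebra.
Set Implicit Arguments. Unset Strict Implicit. Unset Printing Implicit Defensive.
Import GRing.Theory.
Local Open Scope ring_scope.

Definition is_involution (R : pzRingType) (star : R -> R) : Prop :=
  (forall x y : R, star (x + y) = star x + star y) /\
  (forall x y : R, star (x * y) = star y * star x) /\
  (forall x : R, star (star x) = x).

Section StarDefs.
Variables (R : pzRingType) (star : R -> R).

Definition central_proj (h : R) : Prop :=
  h = h * h /\ h = star h /\ (forall r : R, h * r = r * h).

Definition sleq (a b : R) : Prop :=
  exists x : R, a = x * a /\ a = x * b /\ a = a * star x /\ a = b * star x.

Definition sorth (a b : R) : Prop :=
  exists x : R, x * a = a /\ a = a * star x /\ x * b = 0 /\ 0 = b * star x.

Definition sequiv (a b : R) : Prop :=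
  exists x y : R,
    a * star a = x * star x /\ b * star b = y * star y /\
    star a * a = star y * y /\ star b * b = star x * x /\
    x = a * x /\ a * x = x * b /\ y = b * y /\ b * y = y * a.

Definition sdom (a b : R) : Prop := exists c : R, sequiv a c /\ sleq c b.

Definition gen_comparable (a b : R) : Prop :=
  exists h : R, central_proj h /\
    sdom (h * a) (h * b) /\ sdom ((1 - h) * b) ((1 - h) * a).

Definition very_orth (a b : R) : Prop :=
  exists h : R, central_proj h /\ h * a = a /\ h * b = 0.

End StarDefs.

(* Main.v *)
Require Import Defs.
From mathcomp Require Import all_boot all_algebra.
Set Implicit Arguments. Unset Strict Implicit.
Import GRing.Theory.
Local Open Scope ring_scope.

Lemma star1 (R : pzRingType) (star : R -> R) : is_involution star -> star 1 = 1.
Proof.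
move=> [hA [hM hI]].
have H : forall y, y = star 1 * y.
  by move=> y; have := hM (star y) 1; rewrite mulr1 !hI.
by rewrite {2}(H 1) mulr1.
Qed.

Lemma star0 (R : pzRingType) (star : R -> R) : is_involution star -> star 0 = 0.
Proof.
move=> [hA _]. have := hA 0 0. rewrite addr0 => /eqP.
by rewrite eq_sym -subr_eq0 addrK => /eqP.
Qed.

Lemma starN (R : pzRingType) (star : R -> R) x : is_involution star -> star (- x) = - star x.
Proof.
move=> hs; have [hA _] := hs. apply/eqP; rewrite -subr_eq0 opprK -hA addrC subrr.
by rewrite star0.
Qed.

Lemma starB (R : pzRingType) (star : R -> R) x y : is_involution star ->
  star (x - y) = star x - star y.
Proof. by move=> hs; have [hA _] := hs; rewrite hA starN. Qed.

Lemma cp_compl (R : pzRingType) (star : R -> R) h : is_involution star ->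
  central_proj star h -> central_proj star (1 - h).
Proof.
move=> hs [hh [hst hc]]; split; last split.
- by rewrite mulrBl mul1r mulrBr mulr1 -hh subrr subr0.
- by rewrite starB // star1 // -hst.
- by move=> r; rewrite mulrBl mulrBr mul1r mulr1 hc.
Qed.

Lemma cp_cancel (R : pzRingType) (h : R) : 1 - (1 - h) = h.
Proof. by rewrite opprB addrC subrK. Qed.

Lemma partS (R : pzRingType) (star : R -> R) h p : is_involution star ->
  central_proj star h -> h * p = p -> h * star p = star p.
Proof.
move=> [hA [hM hI]] [hh [hst hc]] hp.
by rewrite -{2}hp hM -hst hc.
Qed.

Lemma partMl (R : pzRingType) (h p r : R) : h * p = p -> h * (p * r) = p * r.
Proof. by move=> hp; rewrite mulrA hp. Qed.

Lemma partMr (R : pzRingType) (star : R -> R) h p r :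
  central_proj star h -> h * p = p -> h * (r * p) = r * p.
Proof. by move=> [hh [hst hc]] hp; rewrite mulrA hc -mulrA hp. Qed.

Lemma crossl (R : pzRingType) (star : R -> R) h p q :
  central_proj star h -> h * p = p -> (1 - h) * q = q -> p * q = 0.
Proof.
move=> [hh [hst hc]] hp hq.
rewrite (_ : p = p * h); last by rewrite -hc hp.
by rewrite -hq mulrA -(mulrA p) mulrBr mulr1 -hh subrr mulr0 mul0r.
Qed.

Lemma crossr (R : pzRingType) (star : R -> R) h p q :
  central_proj star h -> h * p = p -> (1 - h) * q = q -> q * p = 0.
Proof.
move=> [hh [hst hc]] hp hq.
have E : q * h = 0.
  by rewrite -hq -mulrA -hc mulrA mulrBl mul1r -hh subrr mul0r.
by rewrite -hp mulrA E mul0r.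
Qed.

Lemma addmul (R : pzRingType) (star : R -> R) h p1 p2 q1 q2 :
  central_proj star h -> h * p1 = p1 -> h * q1 = q1 ->
  (1 - h) * p2 = p2 -> (1 - h) * q2 = q2 ->
  (p1 + p2) * (q1 + q2) = p1 * q1 + p2 * q2.
Proof.
move=> hc h1 h2 h3 h4.
rewrite mulrDl !mulrDr (crossl hc h1 h4) (crossr hc h2 h3) addr0 add0r //.
Qed.

Lemma sequiv_add (R : pzRingType) (star : R -> R) h a1 c1 a2 c2 :
  is_involution star -> central_proj star h ->
  h * a1 = a1 -> h * c1 = c1 -> (1 - h) * a2 = a2 -> (1 - h) * c2 = c2 ->
  sequiv star a1 c1 -> sequiv star a2 c2 -> sequiv star (a1 + a2) (c1 + c2).
Proof.
move=> hs hc p1 p2 p3 p4 [x1 [y1 [E1 [E2 [E3 [E4 [E5 [E6 [E7 E8]]]]]]]]]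
  [x2 [y2 [F1 [F2 [F3 [F4 [F5 [F6 [F7 F8]]]]]]]]].
have hc' := cp_compl hs hc.
have qx1 : h * x1 = x1 by rewrite E5; apply: partMl.
have qy1 : h * y1 = y1 by rewrite E7; apply: partMl.
have qx2 : (1 - h) * x2 = x2 by rewrite F5; apply: partMl.
have qy2 : (1 - h) * y2 = y2 by rewrite F7; apply: partMl.
have sa1 := partS hs hc p1. have sc1 := partS hs hc p2.
have sx1 := partS hs hc qx1. have sy1 := partS hs hc qy1.
have sa2 := partS hs hc' p3. have sc2 := partS hs hc' p4.
have sx2 := partS hs hc' qx2. have sy2 := partS hs hc' qy2.
have [hA _] := hs.
exists (x1 + x2), (y1 + y2); rewrite !hA.
repeat split; rewrite ?(addmul hc) //.
- by rewrite E1 F1.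
- by rewrite E2 F2.
- by rewrite E3 F3.
- by rewrite E4 F4.
- by rewrite -E5 -F5.
- by rewrite E6 F6.
- by rewrite -E7 -F7.
- by rewrite E8 F8.
Qed.

Lemma sorth_part (R : pzRingType) (star : R -> R) h a c :
  is_involution star -> central_proj star h -> h * a = a ->
  sorth star a c -> exists x, h * x = x /\
    x * a = a /\ a = a * star x /\ x * c = 0 /\ 0 = c * star x.
Proof.
move=> hs [hh [hst hcc]] p [x [E1 [E2 [E3 E4]]]].
have [hA [hM hI]] := hs.
exists (h * x); rewrite hM -hst; repeat split.
- by rewrite mulrA -hh.
- by rewrite -mulrA E1 p.
- by rewrite mulrA -E2 -hcc p.
- by rewrite -mulrA E3 mulr0.
- by rewrite mulrA -E4 mul0r.
Qed.

Lemma sorth_add (R : pzRingType) (star : R -> R) h a1 c1 a2 c2 :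
  is_involution star -> central_proj star h ->
  h * a1 = a1 -> h * c1 = c1 -> (1 - h) * a2 = a2 -> (1 - h) * c2 = c2 ->
  sorth star a1 c1 -> sorth star a2 c2 -> sorth star (a1 + a2) (c1 + c2).
Proof.
move=> hs hc p1 p2 p3 p4 o1 o2.
have hc' := cp_compl hs hc.
have [x1 [qx1 [E1 [E2 [E3 E4]]]]] := sorth_part hs hc p1 o1.
have [x2 [qx2 [F1 [F2 [F3 F4]]]]] := sorth_part hs hc' p3 o2.
have [hA [hM hI]] := hs.
exists (x1 + x2).
have sa1 := partS hs hc p1. have sc1 := partS hs hc p2.
have sx1 := partS hs hc qx1.
have sa2 := partS hs hc' p3. have sc2 := partS hs hc' p4.
have sx2 := partS hs hc' qx2.
rewrite hA.
repeat split; rewrite ?(addmul hc) //.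
- by rewrite E1 F1.
- by rewrite -E2 -F2.
- by rewrite E3 F3 addr0.
- by rewrite -E4 -F4 addr0.
Qed.

Lemma sleq_part (R : pzRingType) (star : R -> R) h b c :
  central_proj star h -> sleq star c (h * b) -> h * c = c.
Proof.
move=> [hh _] [u [E1 [E2 [E3 E4]]]].
by rewrite {1}E4 !mulrA -hh -E4.
Qed.

Lemma sleq_orth (R : pzRingType) (star : R -> R) b c :
  is_involution star -> sleq star c b -> sorth star c (b - c).
Proof.
move=> hs [u [E1 [E2 [E3 E4]]]].
exists u; repeat split => //.
- by rewrite mulrBr -E1 -E2 subrr.
- by rewrite mulrBl -E3 -E4 subrr.
Qed.

Lemma sorth_zero (R : pzRingType) (star : R -> R) a :
  is_involution star -> sorth star a 0.
Proof.
move=> hs; exists 1; rewrite star1 // mul1r mulr1 mulr0 mul0r; done.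
Qed.

Lemma sequiv_sym (R : pzRingType) (star : R -> R) a b :
  sequiv star a b -> sequiv star b a.
Proof.
move=> [x [y [E1 [E2 [E3 [E4 [E5 [E6 [E7 E8]]]]]]]]].
by exists y, x.
Qed.

Lemma sequiv_mulh (R : pzRingType) (star : R -> R) h a b :
  is_involution star -> central_proj star h ->
  sequiv star a b -> sequiv star (h * a) (h * b).
Proof.
move=> hs [hh [hst hcc]] [x [y [E1 [E2 [E3 [E4 [E5 [E6 [E7 E8]]]]]]]]].
have [hA [hM hI]] := hs.
have S : forall q, star (h * q) = h * star q.
  by move=> q; rewrite hM -hst hcc.
have K3 : forall p q, h * p * (h * q) = h * (p * q).
  by move=> p q; rewrite -mulrA (mulrA p) -(hcc p) -mulrA mulrA -hh.
exists (h * x), (h * y); rewrite !S !K3.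
by repeat split; congr (_ * _).
Qed.

Lemma sleq_from_orth (R : pzRingType) (star : R -> R) h z w :
  is_involution star -> central_proj star h ->
  sorth star z w -> h * w = w -> sleq star (h * z) (h * z + w).
Proof.
move=> hs [hh [hst hcc]] [u [E1 [E2 [E3 E4]]]] hw.
have [hA [hM hI]] := hs.
have K : h * u * (h * z) = h * z.
  by rewrite -mulrA (mulrA u) -(hcc u) -mulrA mulrA -hh E1.
have G : h * z * (star u * h) = h * z.
  by rewrite mulrA -(mulrA h z) -E2 -mulrA -(hcc z) mulrA -hh.
exists (h * u); rewrite hM -hst; repeat split.
- by rewrite K.
- by rewrite mulrDr K -mulrA E3 mulr0 addr0.
- by rewrite G.
- by rewrite mulrDl G (mulrA w) -E4 mul0r addr0.
Qed.

Lemma hcompl0 (R : pzRingType) (star : R -> R) h :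
  central_proj star h -> h * (1 - h) = 0.
Proof. by move=> [hh _]; rewrite mulrBr mulr1 -hh subrr. Qed.

Unset Implicit Arguments.
Lemma L {R : pzRingType} (p q d : R) : p + q = p + d + (q - d).
Proof. by rewrite -addrA [d + _]addrC subrK. Qed.

Theorem mainTheorem11 (R : pzRingType) (star : R -> R)
    (hstar : is_involution star) (a b : R) :
  gen_comparable star a b <->
  exists x y z w : R,
    a = x + y /\ b = z + w /\
    sorth star x y /\ sorth star z w /\ sequiv star x z /\
    very_orth star w y.
Proof.
split.
- move=> [h [hc [[c [eq1 le1]] [d [eq2 le2]]]]].
  have hc' := cp_compl hstar hc.
  have pc := sleq_part hc le1.
  have pd := sleq_part hc' le2.
  have [hh [hst hcc]] := hc.
  have [hh' [hst' hcc']] := hc'.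
  have hd : h * d = 0 by rewrite -pd mulrA (hcompl0 hc) mul0r.
  exists (h * a + d), (0 + ((1 - h) * a - d)), (c + (1 - h) * b),
    (h * b - c + 0).
  have Pa : h * (h * a) = h * a by rewrite mulrA -hh.
  have Pb : h * (h * b - c) = h * b - c by rewrite mulrBr pc mulrA -hh.
  have Qa : (1 - h) * ((1 - h) * a - d) = (1 - h) * a - d
    by rewrite mulrBr pd mulrA -hh'.
  have Qb : (1 - h) * ((1 - h) * b) = (1 - h) * b by rewrite mulrA -hh'.
  have Z1 : h * 0 = 0 by rewrite mulr0.
  have Z2 : (1 - h) * 0 = 0 by rewrite mulr0.
  repeat split.
  + rewrite add0r -(L (h * a)) mulrBl mul1r.
    by rewrite [h * a + _]addrC subrK.
  + by rewrite addr0 [c + _]addrC -(L ((1 - h) * b)) mulrBl mul1r subrK.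
  + apply: (sorth_add hstar hc) => //.
      exact: sorth_zero.
    exact: sleq_orth.
  + apply: (sorth_add hstar hc) => //.
      exact: sleq_orth.
    exact: sorth_zero.
  + apply: (sequiv_add hstar hc) => //.
    exact: sequiv_sym.
  + exists h; split => //; split.
      by rewrite addr0.
    by rewrite add0r mulrBr hd subr0 mulrA (hcompl0 hc) mul0r.
- move=> [x [y [z [w [-> [-> [oxy [ozw [exz [k [hc [kw ky]]]]]]]]]]]].
  have hc' := cp_compl hstar hc.
  have [hh [hst hcc]] := hc.
  have kw' : (1 - k) * w = 0 by rewrite mulrBl mul1r kw subrr.
  have ky' : (1 - k) * y = y by rewrite mulrBl mul1r ky subr0.
  exists k; split => //; split.
  + exists (k * z); split.
      by rewrite mulrDr ky addr0; apply: sequiv_mulh.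
    by rewrite mulrDr kw; apply: sleq_from_orth.
  + exists ((1 - k) * x); split.
      rewrite mulrDr kw' addr0; apply: sequiv_sym; exact: sequiv_mulh.
    by rewrite mulrDr ky'; apply: sleq_from_orth.
Qed.
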